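(* Let $\Gamma=(V,E,w)$ be a finite simple weighted digraph with vertex set $V=\{1,\dots,n\}$ and non-negative weights (with $w_{ij}=0$ iff $(i,j)\notin E$), and let $L=D-A$ be its graph Laplacian. Then $\sigma(L)=\{d^{+}(1),\dots,d^{+}(n)\}$ (as multisets) if and only if $\Gamma$ is acyclic.
   Context: $d^{+}(i)=\sum_{j\in V} w_{ij}$ is the out-degree of vertex $i$, $D=\mathrm{diag}(d^{+}(1),\dots,d^{+}(n))$, $A=[w_{ij}]$, and $L=D-A$. $\sigma(L)$ denotes the multiset of eigenvalues of $L$ counted with algebraic multiplicity. A digraph is acyclic if it contains no directed cycle. *)

(* Defs.v *)
From mathcomp Require Import all_boot all_order all_algebra.
Set Implicit Arguments. Unset Strict Implicit. Unset Printing Implicit Defensive.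
Import Order.TTheory GRing.Theory Num.Theory.
Local Open Scope ring_scope.

Definition wd_arc (R : pzRingType) (n : nat) (w : 'M[R]_n) : rel 'I_n :=
  fun i j => w i j != 0.

Definition outdeg (R : pzRingType) (n : nat) (w : 'M[R]_n) (i : 'I_n) : R :=
  \sum_(j < n) w i j.

Definition laplacian (R : pzRingType) (n : nat) (w : 'M[R]_n) : 'M[R]_n :=
  diag_mx (\row_i outdeg w i) - w.

(* sigma(M) = multiset s (algebraic multiplicities): the characteristic
   polynomial of M is prod_{x in s} (X - x), i.e. s is the multiset of its
   roots (in any extension field). *)
Definition spectrum_is (R : comNzRingType) (n : nat) (M : 'M[R]_n) (s : seq R) :=
  char_poly M = \prod_(x <- s) ('X - x%:P).

(* A directed cycle: nonempty sequence of distinct vertices v0 .. vk with arcs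
   v0->v1->...->vk->v0. *)
Definition acyclic (T : eqType) (e : rel T) : Prop :=
  forall s : seq T, s != [::] -> uniq s -> ~~ cycle e s.

(* Main.v *)
Require Import Defs.
From mathcomp Require Import all_boot all_order all_algebra all_fingroup.
From mathcomp Require Import zify.
Set Implicit Arguments. Unset Strict Implicit. Unset Printing Implicit Defensive.
Import Order.TTheory GRing.Theory Num.Theory.
Local Open Scope ring_scope.

Section Orb.
Variable T : finType.
Implicit Types s : {perm T}.

Lemma fixed_orbit s y : s y = y -> porbit s y = [set y].
Proof.
move=> sy; apply/setP => z; rewrite in_set1; apply/idP/eqP => [/porbitP [i ->]|->].
  by elim: i => [|i IH]; rewrite ?expg0 ?perm1 // expgS permM sy.
exact: porbit_id.
Qed.

Lemma orbit_moved s x y : s x != x -> y \in porbit s x -> s y != y.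
Proof.
move=> sx yo; apply/eqP => sy; move: yo; rewrite porbit_sym fixed_orbit // in_set1.
by move/eqP => exy; rewrite exy sy eqxx in sx.
Qed.

Lemma orbit_stable s x y : y \in porbit s x -> s y \in porbit s x.
Proof.
rewrite -eq_porbit_mem => /eqP <-.
by have := mem_porbit s 1 y; rewrite expg1.
Qed.
End Orb.

Section Proof.
Variables (R : realFieldType) (n : nat) (w : 'M[R]_n).
Hypothesis w_ge0 : forall i j, 0 <= w i j.
Hypothesis w_noloop : forall i, w i i = 0.

Definition moved (s : 'S_n) : {set 'I_n} := [set i | s i != i].
Definition good (s : 'S_n) := [forall i, (s i != i) ==> (w i (s i) != 0)].
Definition W (s : 'S_n) := \prod_(i | s i != i) w i (s i).
Definition q (s : 'S_n) := \prod_(i | s i == i) ('X - (outdeg w i)%:P).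
Definition term (s : 'S_n) := (((-1) ^+ s * W s)%:P * q s).

Lemma cpmxE (A : 'M[R]_n) i j : char_poly_mx A i j = 'X *+ (i == j) - (A i j)%:P.
Proof. by rewrite /char_poly_mx !mxE. Qed.

Lemma lapE i j : laplacian w i j = (outdeg w i) *+ (i == j) - w i j.
Proof. by rewrite /laplacian !mxE. Qed.

Lemma char_expand : char_poly (laplacian w) = \sum_(s : 'S_n) term s.
Proof.
rewrite /char_poly /determinant; apply: eq_bigr => s _.
rewrite /term polyCM rmorph_sign -mulrA; congr (_ * _).
rewrite (bigID (fun i => s i == i)) /= mulrC /W rmorph_prod /q.
congr (_ * _); apply: eq_bigr => i H; rewrite cpmxE lapE; case: (eqVneq (s i) i) => E.
- by rewrite E eqxx in H.
- by rewrite !mulr0n !sub0r polyCN opprK.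
- by rewrite E w_noloop subr0 !mulr1n.
- by rewrite H in E.
Qed.

Lemma term1 : term 1 = \prod_i ('X - (outdeg w i)%:P).
Proof.
rewrite /term /W /q odd_perm1 expr0 mul1r big_pred0; last by move=> i; rewrite perm1 eqxx.
rewrite mul1r; apply: eq_bigl => i; by rewrite perm1 eqxx.
Qed.

Lemma goodW s : (W s != 0) = good s.
Proof.
rewrite /W -big_enum prodf_seq_neq0; apply/allP/forallP => H i.
  apply/implyP => hi; have := H i; rewrite mem_enum => /(_ hi); exact.
by move=> hx; rewrite mem_enum in hx; exact: (implyP (H i) hx).
Qed.

Lemma W_ge0 s : 0 <= W s.
Proof. by apply: prodr_ge0 => i _. Qed.

Lemma q_monic s : q s \is monic.
Proof. exact: monic_prod_XsubC. Qed.

Lemma size_q s : size (q s) = (n - #|moved s|).+1.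
Proof.
rewrite /q -big_filter size_prod_XsubC size_filter.
have -> : count (fun i => s i == i) (index_enum 'I_n) = #|[set i | s i == i]|.
  rewrite cardE /enum_mem size_filter /index_enum; rewrite -?enumT unlock /=.
  by apply: eq_count => i; rewrite /= inE.
have -> : [set i | s i == i] = ~: moved s by apply/setP => i; rewrite !inE negbK.
by rewrite cardsCs setCK card_ord.
Qed.

Lemma spec_prod : \prod_(x <- [seq outdeg w i | i <- enum 'I_n]) ('X - x%:P)
   = \prod_i ('X - (outdeg w i)%:P).
Proof. by rewrite big_map big_enum. Qed.

Lemma acyc_good s : acyclic (wd_arc w) -> good s -> s = 1%g.
Proof.
move=> hac hg; apply/permP => x; rewrite perm1; apply/eqP; apply/negPn/negP => hx.
have [m Em] : exists m, #|porbit s x| = m.+1.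
  by case: #|_| (card_porbit_neq0 s x) => // m _; exists m.
have hu := uniq_traject_porbit s x.
apply: (negP (hac _ _ hu)); first by rewrite Em.
apply: (@sub_in_cycle _ (mem (porbit s x)) (frel s)).
- move=> y z hy _ /eqP <-; rewrite /wd_arc.
  by have /implyP := (forallP hg) y; apply; exact: orbit_moved hx hy.
- by apply/allP => y; rewrite -porbit_traject.
have hx' : iter m.+1 s x = x by rewrite -Em iter_porbit.
rewrite Em /=.
have -> : rcons (traject s (s x) m) x = traject s (s x) m.+1 by rewrite trajectSr -iterSr hx'.
exact: fpath_traject.
Qed.

Lemma cyc_good s0 : s0 != [::] -> uniq s0 -> path.cycle (wd_arc w) s0 ->
  exists s : 'S_n, good s && (s != 1%g).
Proof.
move=> ne u cy.
pose f i := if i \in s0 then next s0 i else i.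
have finj : injective f.
  move=> a b; rewrite /f; case: ifP => ha; case: ifP => hb.
  - exact: (can_inj (prev_next u)).
  - by move=> e; rewrite -e mem_next ha in hb.
  - by move=> e; rewrite e mem_next hb in ha.
  - done.
exists (perm finj).
have hg : good (perm finj).
  apply/forallP => i; apply/implyP; rewrite permE /f; case: ifP => hi; last by rewrite eqxx.
  by move=> _; exact: (next_cycle cy hi).
rewrite hg /=.
have [x hx] : exists x, x \in s0 by case: s0 ne {u cy f finj hg} => // x ? _; exists x; rewrite inE eqxx.
apply/eqP => e1.
have := next_cycle cy hx; rewrite /wd_arc.
have : perm finj x = x by rewrite e1 perm1.
by rewrite permE /f hx => ->; rewrite w_noloop eqxx.
Qed.

Lemma min_sign s k : good s -> s != 1%g -> #|moved s| = k ->
  (forall t, good t -> t != 1%g -> k <= #|moved t|)%N -> odd_perm s = ~~ odd k.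
Proof.
move=> hg hs1 hk hmin.
have [x hx] : exists x, s x != x.
  case: (pickP [pred y | s y != y]) => [x hx | h]; first by exists x.
  case/eqP: hs1; apply/permP => y; rewrite perm1; apply/eqP.
  by have := h y; rewrite /= => /negbFE.
pose O := porbit s x.
pose f y := if y \in O then s y else y.
have finj : injective f.
  move=> a b; rewrite /f; case: ifP => ha; case: ifP => hb.
  - exact: perm_inj.
  - by move=> e; have := orbit_stable ha; rewrite e hb.
  - by move=> e; have := orbit_stable hb; rewrite -e ha.
  - done.
pose t := perm finj.
have htE y : t y = f y by rewrite permE.
have xO : x \in O by exact: porbit_id.
have sub : moved t \subset moved s.
  apply/subsetP => y; rewrite !inE htE /f; by case: ifP => //; rewrite eqxx.
have gt : good t.
  apply/forallP => y; apply/implyP; rewrite htE /f; case: ifP => hy; last by rewrite eqxx.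
  by move=> hy'; have /implyP := (forallP hg) y; apply.
have t1 : t != 1%g.
  by apply/eqP => e; have := htE x; rewrite e perm1 /f xO => ex; rewrite -ex eqxx in hx.
have eqM : moved t = moved s.
  apply/eqP; rewrite eqEcard sub /= hk; exact: hmin.
have MO : moved s = O.
  apply/setP => y; apply/idP/idP => hy.
    move: hy; rewrite -eqM inE htE /f; by case: ifP => //; rewrite eqxx.
  by rewrite inE; exact: orbit_moved hx hy.
have PO : porbits s = O |: [set [set y] | y in ~: moved s].
  apply/setP => B; apply/imsetP/setU1P => [[y _ ->]|].
    case: (boolP (y \in moved s)) => hy.
      by left; apply/eqP; rewrite eq_porbit_mem -/O -MO.
    right; rewrite fixed_orbit; last by apply/eqP; move: hy; rewrite inE negbK.
    by apply: imset_f; rewrite inE.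
  case=> [->|]; first by exists x.
  case/imsetP => y hy ->; exists y => //; rewrite fixed_orbit //.
  by apply/eqP; move: hy; rewrite !inE negbK.
have cardP : #|porbits s| = (n - k).+1.
  rewrite PO cardsU1 card_imset; last exact: set1_inj.
  rewrite cardsCs setCK card_ord hk.
  have -> : O \notin [set [set y] | y in ~: moved s].
    apply/negP => /imsetP [y hy eO].
    have : y \in O by rewrite eO set11.
    by rewrite -MO => hyM; rewrite inE hyM in hy.
  by [].
have kn : (k <= n)%N by rewrite -hk -[X in (_ <= X)%N]card_ord; exact: max_card.
rewrite /odd_perm cardP card_ord.
rewrite -{1}(subnKC kn) oddD /=.
by case: (odd k); case: (odd (n - k)).
Qed.

Lemma W0 s : ~~ good s -> W s = 0.
Proof. by move=> g; apply/eqP; rewrite -[_ == 0]negbK goodW. Qed.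

Lemma coef_term s k : s != 1%g ->
  (forall t, good t -> t != 1%g -> k <= #|moved t|)%N -> (k <= n)%N ->
  (term s)`_(n - k) = (#|moved s| == k)%:R * ((-1) ^+ k.+1 * W s).
Proof.
move=> s1 hmin kn.
rewrite /term coefCM.
have ms : (#|moved s| <= n)%N by rewrite -[X in (_ <= X)%N]card_ord; exact: max_card.
case: (ltngtP #|moved s| k) => h.
- rewrite W0 ?mulr0 ?mul0r //; apply/negP => g; have := hmin s g s1.
  by rewrite leqNgt h.
- rewrite nth_default ?mulr0 ?mul0r //.
  rewrite size_q; lia.
- have -> : (q s)`_(n - k) = 1.
    by have := q_monic s; move/monicP; rewrite lead_coefE size_q h.
  rewrite mulr1 mul1r.
  case: (boolP (good s)) => g; last by rewrite W0 // !mulr0.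
  by rewrite (min_sign g s1 h hmin) -[(-1) ^+ k.+1]signr_odd /=.
Qed.

End Proof.

Unset Implicit Arguments.

Theorem theorem2p6 (R : realFieldType) (n : nat) (w : 'M[R]_n)
  (w_ge0 : forall i j, 0 <= w i j)
  (w_noloop : forall i, w i i = 0) :
  spectrum_is (laplacian w) [seq outdeg w i | i <- enum 'I_n]
  <-> acyclic (wd_arc w).
Proof.
split.
- move=> hsp s0 ne u; apply/negP => cy.
  have [s1 /andP [g1 n1]] := cyc_good w_noloop ne u cy.
  have exP : exists m, [exists t : 'S_n, [&& good w t, t != 1%g & #|moved t| == m]].
    by exists #|moved s1|; apply/existsP; exists s1; rewrite g1 n1 eqxx.
  case: (ex_minnP exP) => k /existsP [s2 /and3P [g2 n2 /eqP m2]] hmin'.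
  have hmin t : good w t -> t != 1%g -> (k <= #|moved t|)%N.
    move=> g n0; apply: hmin'; apply/existsP; exists t; by rewrite g n0 eqxx.
  have kn : (k <= n)%N by rewrite -m2 -[X in (_ <= X)%N]card_ord; exact: max_card.
  move: hsp; rewrite /spectrum_is spec_prod char_expand // (bigD1 1%g) //= term1 //.
  move/(congr1 (fun p => p - term w 1%g)); rewrite term1 // addrC addrK subrr => hs.
  have := congr1 (fun p : {poly R} => p`_(n - k)) hs; rewrite /= coef_sum coef0.
  rewrite (eq_bigr (fun s => (#|moved s| == k)%:R * ((-1) ^+ k.+1 * W w s))); last first.
    by move=> s sn; apply: coef_term.
  under eq_bigr do rewrite mulrCA.
  rewrite -mulr_sumr => /eqP; rewrite mulf_eq0 signr_eq0 /=; apply/negP.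
  have Wpos : 0 < W w s2 by rewrite lt_def W_ge0 // andbT goodW.
  rewrite gt_eqF // (bigD1 s2) //= m2 eqxx mul1r.
  rewrite ltr_wpDr // sumr_ge0 // => s _.
  by rewrite mulr_ge0 ?W_ge0 ?ler0n.
- move=> hac.
  rewrite /spectrum_is spec_prod char_expand // (bigD1 1%g) //=.
  suff -> : \sum_(s | s != 1%g) term w s = 0 by rewrite addr0 term1.
  apply: big1 => s s1.
  rewrite /term W0 ?mulr0 ?mul0r //; apply/negP => g.
  by rewrite (acyc_good hac g) eqxx in s1.
Qed.
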